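(* Let $L$ be a regular zero-one language and $\mathcal{A}_L=\langle Q,A,\cdot,q_0,F\rangle$ its minimal automaton. Then for every subset $P\subseteq Q$, the language $\mathrm{Past}(P)=\{w\in A^*: q_0\cdot w\in P\}$ is also a zero-one language.
   Context: $\mu(L)=\lim_{n\to\infty}|L\cap A^n|/|A|^n$ when it exists; a zero-one language is a regular language $L$ with $\mu(L)$ existing and in $\{0,1\}$. Automata are complete, deterministic, finite, accessible. *)

(* Defs.v *)
From HB Require Import structures.
From mathcomp Require Import all_boot all_order all_algebra.
Set Implicit Arguments. Unset Strict Implicit. Unset Printing Implicit Defensive.
Import Order.TTheory GRing.Theory Num.Theory.
Local Open Scope ring_scope.

Record dfa (A : finType) := DFA {
  dstate : finType;
  ddelta : dstate -> A -> dstate;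
  dinit  : dstate;
  dfinal : pred dstate }.

Definition run {A : finType} (D : dfa A) (q : dstate D) (w : seq A) : dstate D :=
  foldl (@ddelta A D) q w.
Arguments run {A} D q w.
Arguments dinit {A} d.

Definition accept {A : finType} (D : dfa A) (w : seq A) : bool :=
  @dfinal A D (run D (dinit D) w).

Definition accessible (A : finType) (D : dfa A) : Prop :=
  forall q : dstate D, exists w : seq A, run D (dinit D) w = q.

Definition recognizes (A : finType) (D : dfa A) (L : pred (seq A)) : Prop :=
  forall w, L w = accept D w.

Definition regular (A : finType) (L : pred (seq A)) : Prop :=
  exists D : dfa A, recognizes D L.

Definition minimal_automaton (A : finType) (D : dfa A) (L : pred (seq A)) : Prop :=
  [/\ accessible D, recognizes D L &
      forall D' : dfa A, recognizes D' L -> (#|dstate D| <= #|dstate D'|)%N ].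

Definition dens (A : finType) (L : pred (seq A)) (n : nat) : rat :=
  (#|[set w : n.-tuple A | L (tval w)]|)%:R / (#|A| ^ n)%:R.

Definition cvgQ (u : nat -> rat) (l : rat) : Prop :=
  forall eps : rat, 0 < eps -> exists N : nat, forall n, (N <= n)%N -> `|u n - l| < eps.

Definition zero_one (A : finType) (L : pred (seq A)) : Prop :=
  regular L /\ (cvgQ (dens L) 0 \/ cvgQ (dens L) 1).

(* Main.v *)
Require Import Defs.
From HB Require Import structures.
From mathcomp Require Import all_boot all_order all_algebra.
From mathcomp Require Import zify lra ring.
Set Implicit Arguments. Unset Strict Implicit. Unset Printing Implicit Defensive.

Fixpoint Nw (A : finType) (D : dfa A) (S : pred (dstate D)) (n : nat) (q : dstate D) : nat :=
  match n with 0 => nat_of_bool (S q) | n'.+1 => \sum_(a : A) Nw S n' (ddelta q a) end.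

Lemma card_sum (T : finType) (p : pred T) : #|[set x | p x]| = \sum_(x : T) nat_of_bool (p x).
Proof. rewrite -sum1_card big_mkcond /=. by apply: eq_bigr => i _; rewrite inE; case: (p i). Qed.

Lemma sum_tupleS (A : finType) n (f : n.+1.-tuple A -> nat) :
  \sum_(t : n.+1.-tuple A) f t = \sum_(a : A) \sum_(t : n.-tuple A) f [tuple of a :: t].
Proof.
rewrite pair_big /=.
rewrite (reindex (fun p : A * n.-tuple A => [tuple of p.1 :: p.2])) //=.
exists (fun t => (thead t, [tuple of behead t])) => [[a t] _|t _] /=.
  by rewrite theadE; congr pair; apply: val_inj.
by rewrite [RHS]tuple_eta.
Qed.

Lemma card_Nw (A : finType) (D : dfa A) (S : pred (dstate D)) n q :
  #|[set w : n.-tuple A | S (run D q w)]| = Nw S n q.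
Proof.
rewrite card_sum; elim: n q => [|n IH] q /=.
  rewrite (big_pred1 [tuple]) // => t; symmetry; apply/eqP; apply: val_inj; by case: t => [[]].
rewrite sum_tupleS; apply: eq_bigr => a _; rewrite -IH.
by apply: eq_bigr.
Qed.


Lemma Nw_compl (A : finType) (D : dfa A) (S : pred (dstate D)) n q :
  Nw S n q + Nw (predC S) n q = #|A| ^ n.
Proof.
elim: n q => [|n IH] q /=; first by case: (S q).
rewrite -big_split /= expnS -sum_nat_const; apply: eq_bigr => a _; exact: IH.
Qed.

Lemma Nw_le (A : finType) (D : dfa A) (S S' : pred (dstate D)) n q :
  (forall r, S r -> S' r) -> Nw S n q <= Nw S' n q.
Proof.
move=> H; elim: n q => [|n IH] q /=.
  by case E: (S q) => //; rewrite (H _ E).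
by apply: leq_sum => a _; exact: IH.
Qed.

Lemma Nw_ext (A : finType) (D : dfa A) (S S' : pred (dstate D)) n q :
  S =1 S' -> Nw S n q = Nw S' n q.
Proof. by move=> H; apply/eqP; rewrite eqn_leq !Nw_le // => r; rewrite H. Qed.

Lemma Nw_comp (A : finType) (D : dfa A) (S : pred (dstate D)) k n q :
  Nw S (k + n) q = \sum_(r : dstate D) Nw (pred1 r) k q * Nw S n r.
Proof.
elim: k q => [|k IH] q.
  rewrite /= (bigD1 q) //= eqxx mul1n big1 ?addn0 // => r /negbTE.
  by rewrite eq_sym => ->.
rewrite addSn /=.
rewrite (eq_bigr _ (fun a _ => IH (ddelta q a))).
rewrite exchange_big /=; apply: eq_bigr => r _.
by rewrite big_distrl.
Qed.

Lemma Nw_sum1 (A : finType) (D : dfa A) (S : pred (dstate D)) n q :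
  Nw S n q = \sum_(r : dstate D) Nw (pred1 r) n q * S r.
Proof. by have := Nw_comp S n 0 q; rewrite addn0. Qed.

Lemma Nw_run (A : finType) (D : dfa A) (S : pred (dstate D)) u q :
  S (run D q u) -> 0 < Nw S (size u) q.
Proof.
elim: u q => [|a u IH] q /=; first by rewrite /run /= => ->.
move=> H; rewrite (bigD1 a) //=; apply: leq_trans (leq_addr _ _); exact: IH.
Qed.

Lemma Nw_pos (A : finType) (D : dfa A) (S : pred (dstate D)) n q :
  0 < Nw S n q -> exists u : seq A, size u = n /\ S (run D q u).
Proof.
elim: n q => [|n IH] q /=.
  by case E: (S q) => // _; exists [::].
move=> H; have [a _ Ha] : exists2 a, a \in A & 0 < Nw S n (ddelta q a).
  apply/exists_inP; apply: contraLR H; rewrite negb_exists_in => /forall_inP Hn.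
  rewrite -leqNgt leqn0 sum_nat_eq0; apply/forall_inP => a _.
  by have := Hn a isT; rewrite lt0n negbK.
by have [u [Hu Hs]] := IH _ Ha; exists (a :: u); rewrite /= Hu.
Qed.

Lemma Nw_closed (A : finType) (D : dfa A) (S : pred (dstate D)) n q :
  (forall r a, S r -> S (ddelta r a)) -> S q -> Nw (predC S) n q = 0.
Proof.
move=> Hc; elim: n q => [|n IH] q /= Hq; first by rewrite Hq.
by rewrite big1 // => a _; apply: IH; apply: Hc.
Qed.


Definition dedge (A : finType) (D : dfa A) : rel (dstate D) :=
  fun x y => [exists a, ddelta x a == y].

Lemma reach_run (A : finType) (D : dfa A) q u : connect (@dedge A D) q (run D q u).
Proof.
elim: u q => [|a u IH] q; first exact: connect0.
apply: connect_trans (IH _); apply: connect1; apply/existsP; by exists a.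
Qed.

Lemma reach_word (A : finType) (D : dfa A) q r :
  connect (@dedge A D) q r -> exists u, run D q u = r.
Proof.
move/connectP=> [p Hp ->]; elim: p q Hp => [|x p IH] q /=; first by exists [::].
move=> /andP[/existsP[a /eqP Ha] Hp]; have [u Hu] := IH _ Hp.
by exists (a :: u); rewrite /run /= Ha.
Qed.

Lemma unif_bound (T : finType) (P : T -> nat -> Prop) :
  (forall x, exists n, P x n) -> exists K, forall x, exists n, n <= K /\ P x n.
Proof.
move=> H.
suff [K HK] : exists K, forall x, x \in enum T -> exists n, n <= K /\ P x n.
  by exists K => x; apply: HK; rewrite mem_enum.
elim: (enum T) => [|y s [K IH]]; first by exists 0.
have [m Hm] := H y; exists (maxn m K) => x; rewrite inE => /orP[/eqP ->|Hx].
  by exists m; rewrite leq_maxl.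
have [n [Hn Pn]] := IH x Hx; exists n; split => //.
by apply: leq_trans Hn (leq_maxr _ _).
Qed.

Definition Ustates (A : finType) (D : dfa A) (F : pred (dstate D)) : pred (dstate D) :=
  [pred q | [forall r, connect (@dedge A D) q r ==> F r]].

Lemma U_closed (A : finType) (D : dfa A) (F : pred (dstate D)) r a :
  Ustates F r -> Ustates F (ddelta r a).
Proof.
move=> /forallP H; apply/forallP => x; apply/implyP => Hx.
apply: (implyP (H x)); apply: connect_trans Hx; apply: connect1.
by apply/existsP; exists a.
Qed.

Lemma U_F (A : finType) (D : dfa A) (F : pred (dstate D)) r : Ustates F r -> F r.
Proof. by move=> /forallP /(_ r) /implyP; apply; apply: connect0. Qed.

Lemma U_run (A : finType) (D : dfa A) (F : pred (dstate D)) r u :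
  Ustates F r -> Ustates F (run D r u).
Proof. by elim: u r => [|a u IH] r //= Hr; apply: IH; apply: U_closed. Qed.


Lemma Nw_total (A : finType) (D : dfa A) n q : Nw (@predT (dstate D)) n q = #|A| ^ n.
Proof.
have := Nw_compl predT n q; rewrite (@Nw_closed _ _ predT) ?addn0 //.
Qed.

Lemma Nw_shift (A : finType) (D : dfa A) (S : pred (dstate D)) k n q u :
  size u = k -> Nw S n (run D q u) <= Nw S (k + n) q.
Proof.
move=> Hu; rewrite Nw_comp (bigD1 (run D q u)) //=.
apply: leq_trans _ (leq_addr _ _).
have : 0 < Nw (pred1 (run D q u)) k q by rewrite -Hu; apply: Nw_run; rewrite /= eqxx.
by case: (Nw _ _ _) => // m _; rewrite mulSn leq_addr.
Qed.

Lemma window (A : finType) (D : dfa A) (F : pred (dstate D)) q K n :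
  (forall r, connect (@dedge A D) q r ->
     exists j, j <= K /\ 0 < Nw (predC F) j r) ->
  #|A| ^ n <= \sum_(j < K.+1) Nw (predC F) (n + j) q.
Proof.
move=> H.
under eq_bigr do rewrite Nw_comp.
rewrite exchange_big /= -(Nw_total n q) Nw_sum1.
apply: leq_sum => r _; rewrite -big_distrr /= leq_mul2l.
case E: (Nw (pred1 r) n q) => [|m] //=.
have [u [_ Hu]] : exists u : seq A, size u = n /\ pred1 r (run D q u).
  by apply: Nw_pos; rewrite E.
move/eqP: Hu => Hu.
have [j [Hj Hpos]] : exists j, j <= K /\ 0 < Nw (predC F) j r.
  by apply: H; rewrite -Hu; apply: reach_run.
rewrite (bigD1 (Ordinal (Hj : j < K.+1))) //=.
by apply: leq_trans Hpos _; apply: leq_addr.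
Qed.


Lemma no_bad (A : finType) (D : dfa A) (F : pred (dstate D)) (hA : 0 < #|A|)
  (Hacc : accessible D)
  (Hcv : forall C, 0 < C -> exists T, forall t, T <= t ->
           Nw (predC F) t (dinit D) * C < #|A| ^ t) q :
  exists u, Ustates F (run D q u).
Proof.
case E: [exists r, connect (@dedge A D) q r && Ustates F r].
  move/existsP: E => [r /andP[Hr Ur]]; have [u Hu] := reach_word Hr.
  by exists u; rewrite Hu.
exfalso.
have Hb : forall x, exists n, connect (@dedge A D) q x -> 0 < Nw (predC F) n x.
  move=> x; case Hx: (connect (@dedge A D) q x); last by exists 0.
  have nU : ~~ Ustates F x.
    by apply: contraFN E => Ux; apply/existsP; exists x; rewrite Hx.
  move: nU; rewrite /Ustates inE negb_forall => /existsP[y].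
  rewrite negb_imply => /andP[Hxy Fy]; have [w Hw] := reach_word Hxy.
  exists (size w) => _; apply: Nw_run; by rewrite Hw.
have [K HK] := unif_bound Hb.
have Hw : forall r, connect (@dedge A D) q r -> exists j, j <= K /\ 0 < Nw (predC F) j r.
  move=> r Hr; have [j [Hj Pj]] := HK r; exists j; split => //; exact: Pj.
have [u0 Hu0] := Hacc q; set k := size u0.
set a := #|A|.
have Cpos : 0 < K.+1 * a ^ (k + K) by rewrite muln_gt0 /= expn_gt0 hA.
have [T HT] := Hcv _ Cpos.
have Hwin := window T Hw.
have Hj : forall j : 'I_K.+1,
    (Nw (predC F) (T + j) q * (K.+1 * a ^ (k + K))).+1 <= a ^ (k + T + K).
  move=> j; have Hs : Nw (predC F) (T + j) q <= Nw (predC F) (k + (T + j)) (dinit D).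
    by rewrite -Hu0; apply: Nw_shift.
  have Ht := HT (k + (T + j)) (leq_trans (leq_addr _ _) (leq_addl _ _)).
  apply: leq_trans (leq_trans _ Ht) _.
    by rewrite ltnS leq_mul2r Hs orbT.
  apply: leq_pexp2l => //; rewrite -addnA leq_add2l leq_add2l -ltnS; exact: ltn_ord.
have Hsum : \sum_(j < K.+1) (Nw (predC F) (T + j) q * (K.+1 * a ^ (k + K)) + 1)
   <= \sum_(j < K.+1) a ^ (k + T + K) by apply: leq_sum => j _; rewrite addn1; exact: Hj.
rewrite sum_nat_const card_ord big_split /= sum_nat_const card_ord -big_distrl /= in Hsum.
have : a ^ T * (K.+1 * a ^ (k + K)) + K.+1 * 1 <= K.+1 * a ^ (k + T + K).
  apply: leq_trans Hsum; rewrite muln1 leq_add2r leq_mul2r Hwin orbT //.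
have -> : a ^ T * (K.+1 * a ^ (k + K)) = K.+1 * a ^ (k + T + K).
  by rewrite mulnCA -expnD [T + _]addnC addnAC.
by rewrite -mulnDr leq_mul2l /= addn1 ltnn.
Qed.


Lemma bern (e j : nat) : e ^ j * (e + j) <= e * (e + 1) ^ j.
Proof.
elim: j => [|j IH]; first by rewrite addn0 expn0 mul1n muln1.
rewrite !expnS; move: IH; set X := e ^ j; set Y := (e + 1) ^ j => IH.
have H1 : (e + 1) * (X * (e + j)) <= (e + 1) * (e * Y) by rewrite leq_mul2l IH orbT.
nia.
Qed.

Lemma step_bound (A : finType) (D : dfa A) (U : pred (dstate D)) s c n q :
  (forall r a, U r -> U (ddelta r a)) ->
  (forall r, ~~ U r -> Nw (predC U) s r <= c) ->
  Nw (predC U) (n + s) q <= c * Nw (predC U) n q.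
Proof.
move=> Hc Hb; rewrite Nw_comp [Nw _ n q]Nw_sum1 big_distrr /=.
apply: leq_sum => r _; rewrite mulnCA leq_mul2l; apply/orP; right.
case Ur: (U r) => /=; first by rewrite muln0 Nw_closed.
by rewrite muln1 Hb // Ur.
Qed.

Lemma to_U (A : finType) (D : dfa A) (F : pred (dstate D)) (hA : 0 < #|A|)
  (Hall : forall q, exists u, Ustates F (run D q u)) :
  forall C, 0 < C -> exists T, forall t, T <= t ->
    Nw (predC (Ustates F)) t (dinit D) * C < #|A| ^ t.
Proof.
set U := Ustates F; set a := #|A|.
have Hc : forall r x, U r -> U (ddelta r x) by move=> r x; apply: U_closed.
have [a0 _] : exists a0 : A, a0 \in A by apply/card_gt0P.
have [K HK] := unif_bound (P := fun q n => exists u, size u = n /\ U (run D q u))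
  (fun q => let: ex_intro u Hu := Hall q in ex_intro _ (size u) (ex_intro _ u (conj erefl Hu))).
have HU : forall r, 0 < Nw U K r.
  move=> r; have [n [Hn [u [Hu Ur]]]] := HK r.
  have -> : K = size (u ++ nseq (K - n) a0) by rewrite size_cat size_nseq Hu subnKC.
  by apply: Nw_run; rewrite /run foldl_cat; apply: U_run.
set e := a ^ K - 1.
have He : e + 1 = a ^ K by rewrite subnK // expn_gt0 hA.
have Hstep : forall n, Nw (predC U) (n + K) (dinit D) <= e * Nw (predC U) n (dinit D).
  move=> n; apply: step_bound => // r _.
  have := Nw_compl U K r; have := HU r; rewrite -/a /e; lia.
have Hstep2 : forall n s, Nw (predC U) (n + s) (dinit D) <= a ^ s * Nw (predC U) n (dinit D).
  move=> n s; apply: step_bound => // r _.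
  by have := Nw_compl U s r; rewrite -/a; lia.
have Hj : forall j, Nw (predC U) (j * K) (dinit D) <= e ^ j.
  elim=> [|j IH]; first by rewrite mul0n expn0 /= leq_b1.
  rewrite mulSn addnC expnS; apply: leq_trans (Hstep _) _; by rewrite leq_mul2l IH orbT.
move=> C HC; exists ((e * C).+1 * K) => t Ht.
set j := (e * C).+1.
have Hej : e ^ j * C < (e + 1) ^ j.
  have [e0|epos] := posnP e; first by rewrite e0 exp0n // mul0n expn_gt0.
  have Hb := bern e j; move: Hb; set X := e ^ j; set Y := (e + 1) ^ j => Hb.
  rewrite -(ltn_pmul2l epos).
  apply: leq_trans Hb; rewrite mulnA [e * X]mulnC -mulnA ltn_pmul2l ?expn_gt0 ?epos //.
  by rewrite /j; lia.
rewrite -(subnKC Ht).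
apply: leq_trans (_ : (a ^ (t - j * K) * e ^ j * C).+1 <= _).
  rewrite ltnS leq_mul2r; apply/orP; right.
  apply: leq_trans (Hstep2 _ _) _; by rewrite leq_mul2l Hj orbT.
rewrite -/j addnC expnD -mulnA ltn_pmul2l ?expn_gt0 ?hA //.
by rewrite [j * K]mulnC expnM -He.
Qed.



Definition mstate (A : finType) (D : dfa A) (U : pred (dstate D)) : finType :=
  option {q : dstate D | ~~ U q}.

Definition dmerge (A : finType) (D : dfa A) (U : pred (dstate D)) (b : bool) : dfa A :=
  @DFA A (mstate U)
    (fun o x => if o is Some y then insub (ddelta (val y) x) else None)
    (insub (dinit D))
    (fun o => if o is Some y then dfinal (val y) else b).

Lemma run_merge_none (A : finType) (D : dfa A) (U : pred (dstate D)) b w :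
  run (dmerge U b) None w = None.
Proof. by elim: w. Qed.

Lemma run_merge (A : finType) (D : dfa A) (U : pred (dstate D)) b
  (Hc : forall r a, U r -> U (ddelta r a)) q w :
  run (dmerge U b) (insub q) w = insub (run D q w).
Proof.
have HU : forall r w', U r -> U (run D r w').
  by move=> r w'; elim: w' r => //= y w' IH' r Hr; apply: IH'; apply: Hc.
elim: w q => [|x w IH] q //=.
case Uq: (U q).
  rewrite insubF ?Uq // run_merge_none insubF //.
  by rewrite (HU _ _ (Hc _ x Uq)).
by rewrite insubT ?Uq //= => h; rewrite -IH.
Qed.

Lemma card_merge (A : finType) (D : dfa A) (U : pred (dstate D)) b :
  #|dstate (dmerge U b)| = #|[predC U]|.+1.
Proof. by rewrite /= card_option card_sig. Qed.

Import Order.TTheory GRing.Theory Num.Theory.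
Open Scope ring_scope.

Lemma rat_to0 (x y C : nat) : (0 < y)%N -> (0 < C)%N ->
  `|(x%:R / y%:R : rat)| < (C%:R)^-1 -> (x * C < y)%N.
Proof.
move=> y0 C0; rewrite ger0_norm ?divr_ge0 ?ler0n // ltr_pdivrMr ?ltr0n //.
by rewrite mulrC ltr_pdivlMr ?ltr0n // -natrM ltr_nat.
Qed.

Lemma rat_cvg0 (x y C : nat) : (0 < y)%N -> (0 < C)%N ->
  `|(x%:R / y%:R : rat) - 0| < (C%:R)^-1 -> (x * C < y)%N.
Proof. by rewrite subr0; apply: rat_to0. Qed.

Lemma rat_cvg1 (x y C : nat) : (x <= y)%N -> (0 < y)%N -> (0 < C)%N ->
  `|(x%:R / y%:R : rat) - 1| < (C%:R)^-1 -> ((y - x) * C < y)%N.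
Proof.
move=> xy y0 C0; have -> : (x%:R / y%:R : rat) - 1 = - ((y - x)%:R / y%:R).
  rewrite natrB // mulrBl divff ?pnatr_eq0 -?lt0n //; lra.
by rewrite normrN; apply: rat_to0.
Qed.

Lemma out_cvg (B X : nat -> nat) (a : nat) (l : rat) : (0 < a)%N ->
  (forall C, (0 < C)%N -> exists T, forall t, (T <= t)%N -> (B t * C < a ^ t)%N) ->
  (forall t, `|(X t)%:R / (a ^ t)%:R - l| <= (B t)%:R / (a ^ t)%:R) ->
  cvgQ (fun t => (X t)%:R / (a ^ t)%:R) l.
Proof.
move=> a0 HB HX eps eps0.
set C := (Num.Def.archi_bound (eps^-1)).+1.
have HC : eps^-1 < C%:R.
  apply: lt_le_trans (archi_boundP _) _; first by rewrite invr_ge0 ltW.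
  by rewrite ler_nat.
have [T HT] := HB C isT; exists T => t Ht; apply: le_lt_trans (HX t) _.
have := HT t Ht; rewrite -(ltr_nat rat) natrM.
have : (0 : rat) < (a ^ t)%:R by rewrite ltr0n expn_gt0 a0.
have : eps * C%:R > 1.
  by rewrite -(ltr_pdivrMl _ _ eps0) mulr1.
have : (0 : rat) < C%:R by rewrite ltr0n.
move: (B t)%:R (a ^ t)%:R (C%:R : rat) => b y c H0 H1 H2 H3.
rewrite ltr_pdivrMr //; nra.
Qed.

Lemma bnd0 (x y w : nat) : (x <= w)%N -> `|(x%:R / y%:R : rat) - 0| <= w%:R / y%:R.
Proof.
move=> xw; rewrite subr0 ger0_norm ?divr_ge0 ?ler0n //.
by rewrite ler_wpM2r ?invr_ge0 ?ler0n // ler_nat.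
Qed.

Lemma bnd1 (x y z w : nat) : (x + z = y)%N -> (z <= w)%N -> (0 < y)%N ->
  `|(x%:R / y%:R : rat) - 1| <= w%:R / y%:R.
Proof.
move=> Hy zw y0; have -> : (x%:R / y%:R : rat) - 1 = - (z%:R / y%:R).
  rewrite -Hy natrD; field; rewrite -natrD pnatr_eq0 -lt0n Hy //.
rewrite normrN -[_ / _]subr0; exact: bnd0.
Qed.

Close Scope ring_scope.

Theorem lemma6 (A : finType) (hA : (0 < #|A|)%N) (L : pred (seq A)) (D : dfa A)
  (hL : zero_one L) (hD : minimal_automaton D L) (P : pred (dstate D)) :
  zero_one (fun w : seq A => P (run D (dinit D) w)).
Proof.
have [Hacc Hrec Hmin] := hD.
split; first by exists (@DFA A (dstate D) (@ddelta A D) (dinit D) P).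
set a := #|A|; set q0 := dinit D.
have Hdens : forall (S : pred (dstate D)) n,
    dens (fun w => S (run D q0 w)) n = ((Nw S n q0)%:R / (a ^ n)%:R)%R.
  by move=> S n; rewrite /dens card_Nw.
have HL : forall n, dens L n = dens (fun w => dfinal (run D q0 w)) n.
  move=> n; rewrite /dens; congr (_%:R / _)%R; apply: eq_card => w.
  by rewrite !inE Hrec.
have [b Hcv] : exists b : bool, forall C, (0 < C)%N -> exists T, forall t, (T <= t)%N ->
    (Nw (predC (fun r => dfinal r == b)) t q0 * C < a ^ t)%N.
  case: hL => _ [H0|H1].
    exists false => C C0; case: (H0 (C%:R^-1)%R) => [|N HN].
      by rewrite invr_gt0 ltr0n.
    exists N => t Ht; have := HN t Ht; rewrite HL Hdens => /rat_cvg0.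
    rewrite expn_gt0 hA C0 => /(_ isT isT).
    by rewrite (@Nw_ext _ _ _ (@dfinal A D)) // => r /=; case: (dfinal r).
  exists true => C C0; case: (H1 (C%:R^-1)%R) => [|N HN].
    by rewrite invr_gt0 ltr0n.
  exists N => t Ht; have := HN t Ht; rewrite HL Hdens => /rat_cvg1.
  have := Nw_compl (@dfinal A D) t q0.
  rewrite (@Nw_ext _ _ (predC (fun r => dfinal r == true)) (predC (@dfinal A D))); last first.
    by move=> r /=; case: (dfinal r).
  move=> Hc; rewrite -Hc leq_addr addKn => H; apply: H => //.
  by rewrite Hc expn_gt0 hA.
pose F := (fun r : dstate D => dfinal r == b).
pose U := Ustates F.
have Hall := no_bad hA Hacc Hcv.
have HB := to_U hA Hall.
have Hc : forall r x, U r -> U (ddelta r x) by move=> r x; apply: U_closed.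
have HU1 : (#|U| <= 1)%N.
  have := Hmin (dmerge U b); rewrite card_merge.
  have := @cardC (dstate D) U; rewrite /= => <-.
  move=> H; suff /H : recognizes (dmerge U b) L by lia.
  move=> w; rewrite Hrec /accept /=.
  rewrite (run_merge b Hc).
  set r := run D (dinit D) w.
  case Ur: (U r).
    by rewrite insubF ?Ur //; apply/eqP; apply: (U_F Ur).
  by rewrite insubT ?Ur.
have [u Hu] := Hall q0; set s := run D q0 u in Hu.
have Us : forall r, U r -> r = s.
  move=> r Ur; move/card_le1_eqP: HU1 => H.
  by apply: H.
have Hd : forall l, cvgQ (fun t => ((Nw P t q0)%:R / (a ^ t)%:R)%R) l ->
    cvgQ (dens (fun w => P (run D q0 w))) l.
  move=> l H eps he; have [N HN] := H eps he; exists N => n Hn; rewrite Hdens; exact: HN.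
case Ps: (P s).
  right; apply: Hd; apply: (out_cvg (B := fun t => Nw (predC U) t q0) hA HB) => t.
  apply: (bnd1 (z := Nw (predC P) t q0)).
  - exact: Nw_compl.
  - apply: Nw_le => r /=; apply: contra => Ur; by rewrite (Us r Ur).
  - by rewrite expn_gt0 hA.
left; apply: Hd; apply: (out_cvg (B := fun t => Nw (predC U) t q0) hA HB) => t.
apply: bnd0; apply: Nw_le => r /= Pr; apply/negP => Ur.
by move: Pr; rewrite (Us r Ur) Ps.
Qed.
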